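(* Every asymptotically uniformly smooth Banach space $X$ has the alternating Banach-Saks property. In particular, if $X$ is also reflexive, then $X$ has the Banach-Saks property.
   Context: The modulus of asymptotic uniform smoothness of $X$ is $\overline{\rho}_X(t)=\sup_{x\in\partial B_X}\inf_{\dim(X/E)<\infty}\sup_{h\in\partial B_E}\|x+th\|-1$ ($E$ closed finite-codimensional subspaces, $\partial B$ the unit sphere); $X$ is asymptotically uniformly smooth if $\lim_{t\to0^+}\overline\rho_X(t)/t=0$. $X$ has the Banach-Saks property if every bounded sequence $(x_n)$ has a subsequence $(x_{n_j})$ with $(\frac1k\sum_{j=1}^kx_{n_j})_k$ norm convergent; it has the alternating Banach-Saks property if every bounded sequence has a subsequence $(x_{n_j})$ and signs $\varepsilon_j\in\{-1,1\}$ with $(\frac1k\sum_{j=1}^k\varepsilon_jx_{n_j})_k$ norm convergent. *)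

(* Defs.v *)
From Stdlib Require Import Reals Lra.
Open Scope R_scope.

Record NormedSpace := {
  V :> Type;
  vzero : V;
  vadd : V -> V -> V;
  vopp : V -> V;
  vscal : R -> V -> V;
  vnorm : V -> R;
  vadd_assoc : forall x y z, vadd x (vadd y z) = vadd (vadd x y) z;
  vadd_comm : forall x y, vadd x y = vadd y x;
  vadd_0 : forall x, vadd x vzero = x;
  vadd_opp : forall x, vadd x (vopp x) = vzero;
  vscal_assoc : forall a b x, vscal a (vscal b x) = vscal (a * b) x;
  vscal_1 : forall x, vscal 1 x = x;
  vscal_distr_l : forall a x y, vscal a (vadd x y) = vadd (vscal a x) (vscal a y);
  vscal_distr_r : forall a b x, vscal (a + b) x = vadd (vscal a x) (vscal b x);
  vnorm_nonneg : forall x, 0 <= vnorm x;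
  vnorm_eq0 : forall x, vnorm x = 0 -> x = vzero;
  vnorm_scal : forall a x, vnorm (vscal a x) = Rabs a * vnorm x;
  vnorm_triangle : forall x y, vnorm (vadd x y) <= vnorm x + vnorm y
}.

Arguments vzero {n}.
Arguments vadd {n}.
Arguments vopp {n}.
Arguments vscal {n}.
Arguments vnorm {n}.

Definition vsub {X : NormedSpace} (x y : X) : X := vadd x (vopp y).

Definition vconverges_to {X : NormedSpace} (u : nat -> X) (y : X) : Prop :=
  forall eps, 0 < eps -> exists N : nat, forall k, (N <= k)%nat -> vnorm (vsub (u k) y) < eps.

Definition vconvergent {X : NormedSpace} (u : nat -> X) : Prop :=
  exists y, vconverges_to u y.

Definition vCauchy {X : NormedSpace} (u : nat -> X) : Prop :=
  forall eps, 0 < eps -> exists N : nat, forall m n, (N <= m)%nat -> (N <= n)%nat ->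
    vnorm (vsub (u m) (u n)) < eps.

Definition complete (X : NormedSpace) : Prop :=
  forall u : nat -> X, vCauchy u -> vconvergent u.

Record BanachSpace := {
  bspace :> NormedSpace;
  bcomplete : complete bspace
}.

Fixpoint vsum {X : NormedSpace} (f : nat -> X) (k : nat) : X :=
  match k with
  | O => vzero
  | S k' => vadd (vsum f k') (f k')
  end.

Definition cesaro {X : NormedSpace} (f : nat -> X) (k : nat) : X :=
  vscal (/ INR k) (vsum f k).

Definition bounded_seq {X : NormedSpace} (u : nat -> X) : Prop :=
  exists M, forall n, vnorm (u n) <= M.

Definition strictly_increasing (phi : nat -> nat) : Prop :=
  forall i j, (i < j)%nat -> (phi i < phi j)%nat.

Definition banach_saks (X : NormedSpace) : Prop :=
  forall u : nat -> X, bounded_seq u ->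
    exists phi, strictly_increasing phi /\ vconvergent (cesaro (fun j => u (phi j))).

Definition alternating_banach_saks (X : NormedSpace) : Prop :=
  forall u : nat -> X, bounded_seq u ->
    exists (phi : nat -> nat) (s : nat -> R), strictly_increasing phi /\
      (forall j, s j = 1 \/ s j = -1) /\
      vconvergent (cesaro (fun j => vscal (s j) (u (phi j)))).

(** Closed subspaces of finite codimension: E is a linear subspace, closed
    under norm limits, and X/E is finite-dimensional, i.e. there are finitely
    many vectors v_0..v_{n-1} with X = E + span(v_0..v_{n-1}). *)
Definition linear_subspace {X : NormedSpace} (E : X -> Prop) : Prop :=
  E vzero /\ (forall x y, E x -> E y -> E (vadd x y)) /\
  (forall a x, E x -> E (vscal a x)).

Definition closed_set {X : NormedSpace} (E : X -> Prop) : Prop :=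
  forall (u : nat -> X) y, (forall n, E (u n)) -> vconverges_to u y -> E y.

Definition finite_codim {X : NormedSpace} (E : X -> Prop) : Prop :=
  exists (n : nat) (v : nat -> X), forall x : X,
    exists (e : X) (c : nat -> R), E e /\
      x = vadd e (vsum (fun i => vscal (c i) (v i)) n).

Definition closed_fin_codim {X : NormedSpace} (E : X -> Prop) : Prop :=
  linear_subspace E /\ closed_set E /\ finite_codim E.

(** [modulus_le X t c] unfolds  rho_X(t) <= c, where
    rho_X(t) = sup_{||x||=1} inf_{E} sup_{h in E, ||h||=1} ||x + t h|| - 1.
    (sup_x A(x) <= c  iff  A(x) <= c for all x;  inf_E B(E) <= c  iff  for
    every c' > c some E has B(E) <= c';  sup_h C(h) <= c' iff C(h) <= c' for all h.) *)
Definition modulus_le (X : NormedSpace) (t c : R) : Prop :=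
  forall x : X, vnorm x = 1 ->
    forall c', c < c' ->
      exists E : X -> Prop, closed_fin_codim E /\
        forall h : X, E h -> vnorm h = 1 -> vnorm (vadd x (vscal t h)) - 1 <= c'.

(** Asymptotic uniform smoothness:  lim_{t -> 0+} rho_X(t)/t = 0, i.e.
    for every eps > 0 there is delta > 0 with rho_X(t) <= eps t for all
    0 < t < delta.  The lower bound is automatic since rho_X >= 0 for
    infinite-dimensional X. *)
Definition asymptotically_uniformly_smooth (X : NormedSpace) : Prop :=
  forall eps, 0 < eps -> exists delta, 0 < delta /\
    forall t, 0 < t -> t < delta ->
      modulus_le X t (eps * t).

Definition in_dual {X : NormedSpace} (f : X -> R) : Prop :=
  (forall x y, f (vadd x y) = f x + f y) /\
  (forall a x, f (vscal a x) = a * f x) /\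
  (exists M, forall x, Rabs (f x) <= M * vnorm x).

(** Reflexivity: the canonical embedding X -> X** is onto.  A functional
    Phi on X* is linear on X* and bounded, |Phi f| <= C ||f||_*, where
    ||f||_* = inf { M >= 0 | forall x, |f x| <= M ||x|| }. *)
Definition reflexive (X : NormedSpace) : Prop :=
  forall Phi : (X -> R) -> R,
    (forall f g, in_dual f -> in_dual g -> Phi (fun x => f x + g x) = Phi f + Phi g) ->
    (forall a f, in_dual f -> Phi (fun x => a * f x) = a * Phi f) ->
    (exists C, forall f M, in_dual f -> 0 <= M ->
        (forall x, Rabs (f x) <= M * vnorm x) -> Rabs (Phi f) <= C * M) ->
    exists x : X, forall f, in_dual f -> Phi f = f x.

(* Main.v *)
Require Import Defs.
From Stdlib Require Import Reals Lra Lia ZArith ClassicalEpsilon Classical.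
Open Scope R_scope.


Arguments vadd_assoc {n}. Arguments vadd_comm {n}. Arguments vadd_0 {n}. Arguments vadd_opp {n}.
Arguments vscal_assoc {n}. Arguments vscal_1 {n}. Arguments vscal_distr_l {n}. Arguments vscal_distr_r {n}.
Arguments vnorm_nonneg {n}. Arguments vnorm_eq0 {n}. Arguments vnorm_scal {n}. Arguments vnorm_triangle {n}.

Section VA.
Variable X : NormedSpace.
Implicit Types x y z : X.

Lemma vadd_0l x : vadd vzero x = x.
Proof. rewrite vadd_comm; apply vadd_0. Qed.

Lemma vadd_cancel x y z : vadd x y = vadd x z -> y = z.
Proof.
intros H. assert (H2 : vadd (vopp x) (vadd x y) = vadd (vopp x) (vadd x z)) by now rewrite H.
rewrite !vadd_assoc, (vadd_comm (vopp x) x), vadd_opp, !vadd_0l in H2. exact H2.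
Qed.

Lemma vscal_0 x : vscal 0 x = vzero.
Proof.
apply (vadd_cancel (vscal 0 x)). rewrite vadd_0, <- vscal_distr_r. f_equal; ring.
Qed.

Lemma vscal_v0 a : vscal a (@vzero X) = vzero.
Proof.
apply (vadd_cancel (vscal a vzero)). rewrite vadd_0, <- vscal_distr_l, vadd_0. reflexivity.
Qed.

Lemma vopp_scal x : vopp x = vscal (-1) x.
Proof.
apply (vadd_cancel x). rewrite vadd_opp.
transitivity (vadd (vscal 1 x) (vscal (-1) x)); [|now rewrite vscal_1].
rewrite <- vscal_distr_r. replace (1 + -1) with 0 by ring. now rewrite vscal_0.
Qed.

Lemma vnorm_0 : vnorm (@vzero X) = 0.
Proof. rewrite <- (vscal_0 vzero), vnorm_scal, Rabs_R0; ring. Qed.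

Lemma vnorm_opp x : vnorm (vopp x) = vnorm x.
Proof. rewrite vopp_scal, vnorm_scal. replace (Rabs (-1)) with 1. ring. rewrite Rabs_left; lra. Qed.

Lemma vadd_scal_same a b x : vadd (vscal a x) (vscal b x) = vscal (a+b) x.
Proof. now rewrite vscal_distr_r. Qed.

Lemma vsub_eq x y : vsub x y = vadd x (vscal (-1) y).
Proof. unfold vsub; now rewrite vopp_scal. Qed.

Lemma vadd_ACA (a b c d : X) : vadd (vadd a b) (vadd c d) = vadd (vadd a c) (vadd b d).
Proof.
rewrite <- !vadd_assoc. f_equal. rewrite !vadd_assoc. f_equal. apply vadd_comm.
Qed.

Lemma vsub_add (a b c d : X) : vsub (vadd a b) (vadd c d) = vadd (vsub a c) (vsub b d).
Proof.
rewrite !vsub_eq, vscal_distr_l. apply vadd_ACA.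
Qed.

Lemma vsub_self x : vsub x x = vzero.
Proof. apply vadd_opp. Qed.

Lemma vsub_0r x : vsub x vzero = x.
Proof. rewrite vsub_eq, vscal_v0; apply vadd_0. Qed.

Lemma vsub_add_cancel (a b : X) : vadd (vsub a b) b = a.
Proof. unfold vsub. rewrite <- vadd_assoc, (vadd_comm (vopp b)), vadd_opp; apply vadd_0. Qed.

Lemma vadd_sub_cancel (a b : X) : vsub (vadd a b) b = a.
Proof. unfold vsub. rewrite <- vadd_assoc, vadd_opp; apply vadd_0. Qed.


Lemma vsub_vsub (a b : X) : vsub a (vsub a b) = b.
Proof.
rewrite !vsub_eq, vscal_distr_l, vscal_assoc.
rewrite <- (vscal_1 a) at 1. rewrite vadd_assoc, vadd_scal_same.
replace (1 + -1) with 0 by ring. rewrite vscal_0, vadd_0l.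
replace (-1 * -1) with 1 by ring. apply vscal_1.
Qed.

Lemma vsub_scal a x y : vscal a (vsub x y) = vsub (vscal a x) (vscal a y).
Proof. rewrite !vsub_eq, vscal_distr_l, !vscal_assoc. f_equal. f_equal. ring. Qed.

Lemma vnorm_sub_sym x y : vnorm (vsub x y) = vnorm (vsub y x).
Proof.
replace (vsub x y) with (vopp (vsub y x)). apply vnorm_opp.
rewrite vopp_scal, !vsub_eq, vscal_distr_l, vscal_assoc, vadd_comm.
f_equal. replace (-1 * -1) with 1 by ring. apply vscal_1.
Qed.

Lemma vsub_trans x y z : vsub x z = vadd (vsub x y) (vsub y z).
Proof.
unfold vsub. rewrite <- vadd_assoc. f_equal.
rewrite vadd_assoc, (vadd_comm (vopp y)), vadd_opp, vadd_0l. reflexivity.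
Qed.

Lemma vnorm_sub_triangle x y z : vnorm (vsub x z) <= vnorm (vsub x y) + vnorm (vsub y z).
Proof. rewrite (vsub_trans x y z). apply vnorm_triangle. Qed.

Lemma vnorm_sub_le x y : vnorm (vsub x y) <= vnorm x + vnorm y.
Proof. unfold vsub. rewrite <- (vnorm_opp y). apply vnorm_triangle. Qed.

Lemma vnorm_add_ge x y : vnorm x - vnorm y <= vnorm (vadd x y).
Proof.
assert (H := vnorm_triangle (vadd x y) (vopp y)).
rewrite <- vadd_assoc, vadd_opp, vadd_0, vnorm_opp in H. lra.
Qed.

Lemma vnorm_add_sub (x v e : X) : vnorm (vadd x v) <= vnorm (vadd x e) + vnorm (vsub v e).
Proof.
replace (vadd x v) with (vadd (vadd x e) (vsub v e)). apply vnorm_triangle.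
rewrite <- vadd_assoc. f_equal. rewrite vadd_comm. apply vsub_add_cancel.
Qed.

Lemma vsum_ext (f g : nat -> X) n : (forall i, (i < n)%nat -> f i = g i) -> vsum f n = vsum g n.
Proof.
induction n; intros H; simpl; auto. rewrite IHn by (intros; apply H; lia). now rewrite H by lia.
Qed.

Lemma vsum_add (f g : nat -> X) n : vsum (fun i => vadd (f i) (g i)) n = vadd (vsum f n) (vsum g n).
Proof.
induction n; simpl. now rewrite vadd_0. rewrite IHn. apply vadd_ACA.
Qed.

Lemma vsum_scal a (f : nat -> X) n : vsum (fun i => vscal a (f i)) n = vscal a (vsum f n).
Proof.
induction n; simpl. now rewrite vscal_v0. now rewrite IHn, vscal_distr_l.
Qed.

Lemma vsum_sub (f g : nat -> X) n : vsum (fun i => vsub (f i) (g i)) n = vsub (vsum f n) (vsum g n).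
Proof.
induction n; simpl. now rewrite vsub_0r. rewrite IHn. now rewrite vsub_add.
Qed.

Lemma vsum_const x n : vsum (fun _ => x) n = vscal (INR n) x.
Proof.
induction n; simpl. now rewrite vscal_0. rewrite IHn.
rewrite <- (vscal_1 x) at 2. rewrite vadd_scal_same. f_equal. destruct n; simpl; ring.
Qed.


End VA.


Section Core.
Variable X : NormedSpace.

Lemma conv_id (x h : X) s t : t <> 0 ->
  vadd x (vscal s h) = vadd (vscal (1 - s/t) x) (vscal (s/t) (vadd x (vscal t h))).
Proof.
intros Ht. rewrite vscal_distr_l, vscal_assoc, vadd_assoc, vadd_scal_same.
replace (1 - s/t + s/t) with 1 by (field; auto). replace (s/t*t) with s by (field; auto).
now rewrite vscal_1.
Qed.

Lemma scale_id (S e : X) rS re : rS <> 0 -> re <> 0 ->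
  vadd S e = vscal rS (vadd (vscal (/rS) S) (vscal (re/rS) (vscal (/re) e))).
Proof.
intros H1 H2. rewrite vscal_distr_l, !vscal_assoc.
replace (rS * / rS) with 1 by (field; auto). replace (rS * (re / rS) * / re) with 1 by (field; auto).
now rewrite !vscal_1.
Qed.

Lemma full_cfc : closed_fin_codim (fun _ : X => True).
Proof.
split; [|split].
- split; [|split]; auto.
- intros u y _ _; auto.
- exists 0%nat, (fun _ => vzero). intros x. exists x, (fun _ => 0). split; auto.
  simpl. now rewrite vadd_0.
Qed.

Definition cand_hyp (P : nat -> nat -> X -> Prop) : Prop :=
  forall N (E : X -> Prop) d, closed_fin_codim E -> 0 < d ->
    exists N' v e, P N N' v /\ E e /\ vnorm (vsub v e) < d.

Lemma good_step (P : nat -> nat -> X -> Prop) M :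
  asymptotically_uniformly_smooth X -> 0 <= M ->
  (forall N N' v, P N N' v -> vnorm v <= M) -> cand_hyp P ->
  forall eta, 0 < eta -> exists r0, 0 < r0 /\ forall S N, r0 <= vnorm S ->
    exists N' v, P N N' v /\ vnorm (vadd S v) <= vnorm S + eta.
Proof.
intros Haus HM Hb Hc eta Heta.
set (eps := eta / (4 * (M + 1))).
assert (Heps : 0 < eps) by (unfold eps; apply Rdiv_lt_0_compat; lra).
destruct (Haus eps Heps) as [delta [Hd Hdel]].
set (t := delta / 2).
assert (Ht : 0 < t) by (unfold t; lra).
assert (Hmod := Hdel t Ht ltac:(unfold t; lra)).
exists ((M + 1) / t). split. apply Rdiv_lt_0_compat; lra.
intros S N HS.
set (rS := vnorm S).
assert (HrS : 0 < rS). { unfold rS. eapply Rlt_le_trans; [|exact HS]. apply Rdiv_lt_0_compat; lra. }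
set (x := vscal (/ rS) S).
assert (Hx : vnorm x = 1).
{ unfold x. rewrite vnorm_scal, Rabs_pos_eq. fold rS. field. lra.
  left. apply Rinv_0_lt_compat; lra. }
destruct (Hmod x Hx (2 * (eps * t))) as [E [HE HEb]]. nra.
destruct (Hc N E (Rmin 1 (eta/2)) HE) as [N' [v [e [HP [Ee Hve]]]]].
{ apply Rmin_glb_lt; lra. }
exists N', v. split; auto.
assert (Hve1 : vnorm (vsub v e) < 1) by (eapply Rlt_le_trans; [exact Hve| apply Rmin_l]).
assert (Hve2 : vnorm (vsub v e) < eta/2) by (eapply Rlt_le_trans; [exact Hve| apply Rmin_r]).
assert (Hev : vnorm e < M + 1).
{ rewrite <- (vsub_vsub _ v e). eapply Rle_lt_trans. apply vnorm_sub_le. specialize (Hb _ _ _ HP). lra. }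
assert (HSe : vnorm (vadd S e) <= rS + eta / 2).
{ destruct (Req_dec (vnorm e) 0) as [He0|He0].
  - apply vnorm_eq0 in He0. subst e. rewrite vadd_0. fold rS. lra.
  - set (re := vnorm e). assert (Hre : 0 < re) by (unfold re; pose proof (vnorm_nonneg e); lra).
    set (h := vscal (/ re) e).
    assert (Hh : vnorm h = 1).
    { unfold h. rewrite vnorm_scal, Rabs_pos_eq. fold re. field. lra.
      left. apply Rinv_0_lt_compat; lra. }
    assert (Eh : E h). { destruct HE as [[_ [_ Hsc]] _]. unfold h; auto. }
    set (s := re / rS).
    assert (Hs0 : 0 <= s) by (unfold s; left; apply Rdiv_lt_0_compat; lra).
    assert (Hst : s <= t).
    { unfold s. apply (Rmult_le_reg_r rS); auto. unfold Rdiv. rewrite Rmult_assoc, Rinv_l, Rmult_1_r by lra.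
      unfold re. fold rS in HS.
      assert (t * ((M+1)/t) <= t * rS) by (apply Rmult_le_compat_l; lra).
      replace (t * ((M+1)/t)) with (M+1) in H by (field; lra). lra. }
    assert (Hconv : vnorm (vadd x (vscal s h)) <= 1 + 2 * eps * s).
    { rewrite (conv_id x h s t) by lra.
      eapply Rle_trans. apply vnorm_triangle.
      rewrite !vnorm_scal, Hx.
      assert (Hsdt0 : 0 <= s / t) by (unfold Rdiv; apply Rmult_le_pos; [lra| left; apply Rinv_0_lt_compat; lra]).
      assert (Hsdt1 : s / t <= 1) by (apply (Rmult_le_reg_r t); auto; unfold Rdiv; rewrite Rmult_assoc, Rinv_l; lra).
      rewrite (Rabs_pos_eq (s/t)) by lra. rewrite (Rabs_pos_eq (1 - s/t)) by lra.
      specialize (HEb h Eh Hh).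
      assert (s / t * vnorm (vadd x (vscal t h)) <= s / t * (1 + 2 * (eps * t))) by (apply Rmult_le_compat_l; lra).
      replace (s / t * (1 + 2 * (eps * t))) with (s/t + 2 * eps * s) in H by (field; lra).
      lra. }
    rewrite (scale_id S e rS re) by lra. fold x. fold s. fold h.
    rewrite vnorm_scal, Rabs_pos_eq by lra.
    assert (rS * vnorm (vadd x (vscal s h)) <= rS * (1 + 2 * eps * s)) by (apply Rmult_le_compat_l; lra).
    replace (rS * (1 + 2 * eps * s)) with (rS + 2 * eps * re) in H by (unfold s; field; lra).
    assert (H0 : 2 * eps * re <= 2 * eps * (M+1)) by (apply Rmult_le_compat_l; [lra| unfold re; lra]).
    replace (2 * eps * (M+1)) with (eta/2) in H0 by (unfold eps; field; lra).
    lra. }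
eapply Rle_trans. apply (vnorm_add_sub _ S v e). fold rS. lra.
Qed.

End Core.


Lemma INR_unbounded r : exists n : nat, r < INR n.
Proof.
destruct (archimed r) as [H1 _].
destruct (Z_le_gt_dec (up r) 0) as [Hz|Hz].
- exists 0%nat. simpl. apply IZR_le in Hz. lra.
- exists (Z.to_nat (up r)). rewrite INR_IZR_INZ, Z2Nat.id by lia. lra.
Qed.

Lemma small_inv eta : 0 < eta -> exists q : nat, / (INR q + 1) <= eta.
Proof.
intros He. destruct (INR_unbounded (/ eta)) as [n Hn]. exists n.
pose proof (pos_INR n).
rewrite <- (Rinv_inv eta). left. apply Rinv_lt_contravar.
apply Rmult_lt_0_compat. apply Rinv_0_lt_compat; lra. lra. lra.
Qed.

Fixpoint qsel (r0 : nat -> R) (r : R) (n : nat) : nat :=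
  match n with
  | O => O
  | S n' => if Rle_dec (r0 (S n')) r then S n' else qsel r0 r n'
  end.

Lemma qsel_spec1 r0 r n : qsel r0 r n = O \/ r0 (qsel r0 r n) <= r.
Proof.
induction n; simpl; auto. destruct (Rle_dec (r0 (S n)) r); auto.
Qed.

Lemma qsel_spec2 r0 r n q : (q <= n)%nat -> r0 q <= r -> (q <= qsel r0 r n)%nat.
Proof.
induction n; intros Hq Hr; simpl. lia.
destruct (Rle_dec (r0 (S n)) r) as [H|H]. lia.
destruct (Nat.eq_dec q (S n)) as [->|Hne]. contradiction. apply IHn; auto. lia.
Qed.

Fixpoint iter_st {X : NormedSpace} (F : nat -> nat -> X -> nat * X) (j : nat) : nat * X :=
  match j with
  | O => (O, vzero)
  | S j' => let p := iter_st F j' in let q := F j' (fst p) (snd p) in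
            (fst q, vadd (snd p) (snd q))
  end.

Lemma core (X : NormedSpace) (P : nat -> nat -> X -> Prop) M :
  asymptotically_uniformly_smooth X -> 0 <= M ->
  (forall N N' v, P N N' v -> vnorm v <= M) -> cand_hyp X P ->
  exists (Ns : nat -> nat) (vs : nat -> X), (forall j, P (Ns j) (Ns (S j)) (vs j)) /\
    forall eta, 0 < eta -> exists A, forall m, vnorm (vsum vs m) <= A + eta * INR m.
Proof.
intros Haus HM Hb Hc.
set (Gr := fun (q : nat) (r0 : R) => 0 < r0 /\ forall (S : X) N, r0 <= vnorm S ->
    exists N' v, P N N' v /\ vnorm (vadd S v) <= vnorm S + / (INR q + 1)).
set (r0f := fun q => epsilon (inhabits 0) (Gr q)).
assert (Hr0 : forall q, Gr q (r0f q)).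
{ intros q. apply epsilon_spec. apply (good_step X P M Haus HM Hb Hc).
  apply Rinv_0_lt_compat. pose proof (pos_INR q); lra. }
set (Gs := fun j N (S : X) (p : nat * X) => P N (fst p) (snd p) /\
   (r0f (qsel r0f (vnorm S) j) <= vnorm S ->
      vnorm (vadd S (snd p)) <= vnorm S + / (INR (qsel r0f (vnorm S) j) + 1))).
set (F := fun j N S => epsilon (inhabits (O, @vzero X)) (Gs j N S)).
assert (HF : forall j N S, Gs j N S (F j N S)).
{ intros j N S. apply epsilon_spec.
  destruct (Rle_dec (r0f (qsel r0f (vnorm S) j)) (vnorm S)) as [Hle|Hnle].
  - destruct (Hr0 (qsel r0f (vnorm S) j)) as [_ Hg].
    destruct (Hg S N Hle) as [N' [v [HP Hv]]]. exists (N', v). split; auto.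
  - destruct (Hc N (fun _ => True) 1 (full_cfc X) ltac:(lra)) as [N' [v [e [HP _]]]].
    exists (N', v). split; auto. intros; contradiction. }
set (Ns := fun j => fst (iter_st F j)).
set (vs := fun j => snd (F j (Ns j) (snd (iter_st F j)))).
assert (Hsum : forall j, snd (iter_st F j) = vsum vs j).
{ induction j; simpl; auto. f_equal; auto. }
exists Ns, vs. split.
{ intros j. destruct (HF j (Ns j) (snd (iter_st F j))) as [HP _]. exact HP. }
intros eta Heta.
destruct (small_inv eta Heta) as [q0 Hq0].
set (sm := fun m => vnorm (vsum vs m)).
assert (Hinc : forall m, sm (S m) <= sm m + M).
{ intros m. unfold sm. simpl. eapply Rle_trans. apply vnorm_triangle.
  apply Rplus_le_compat_l. unfold vs. destruct (HF m (Ns m) (snd (iter_st F m))) as [HP _].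
  eapply Hb. exact HP. }
assert (Hgood : forall m, r0f (qsel r0f (sm m) m) <= sm m ->
   sm (S m) <= sm m + / (INR (qsel r0f (sm m) m) + 1)).
{ intros m. unfold sm. simpl. rewrite <- Hsum. unfold vs.
  destruct (HF m (Ns m) (snd (iter_st F m))) as [_ HG]. exact HG. }
assert (Hlin : forall m, sm m <= M * INR m).
{ induction m. unfold sm; simpl. rewrite vnorm_0. lra.
  rewrite S_INR. specialize (Hinc m). lra. }
assert (Hsm0 : forall m, 0 <= sm m) by (intros; apply vnorm_nonneg).
set (B := Rmax (sm q0) (r0f q0 + M)).
assert (Hk : forall k, sm (q0 + k)%nat <= B + eta * INR k).
{ induction k.
  - rewrite Nat.add_0_r. simpl. unfold B. pose proof (Rmax_l (sm q0) (r0f q0 + M)). lra.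
  - rewrite Nat.add_succ_r, S_INR.
    destruct (Rle_dec (r0f q0) (sm (q0 + k)%nat)) as [Hle|Hnle].
    + set (m := (q0 + k)%nat) in *.
      assert (Hq : (q0 <= qsel r0f (sm m) m)%nat) by (apply qsel_spec2; auto; unfold m; lia).
      assert (Hr : r0f (qsel r0f (sm m) m) <= sm m).
      { destruct (qsel_spec1 r0f (sm m) m) as [H0|H0]; auto. rewrite H0 in *.
        replace q0 with O in Hle by lia. exact Hle. }
      specialize (Hgood m Hr).
      assert (/ (INR (qsel r0f (sm m) m) + 1) <= / (INR q0 + 1)).
      { apply Rinv_le_contravar. pose proof (pos_INR q0); lra. apply le_INR in Hq. lra. }
      lra.
    + specialize (Hinc (q0 + k)%nat). unfold B in *.
      pose proof (Rmax_r (sm q0) (r0f q0 + M)). pose proof (pos_INR k). nra. }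
exists (B + M * INR q0). intros m.
fold (sm m).
assert (HB : 0 <= B) by (unfold B; pose proof (Rmax_l (sm q0) (r0f q0 + M)); pose proof (Hsm0 q0); lra).
pose proof (pos_INR m). pose proof (pos_INR q0).
destruct (Nat.lt_ge_cases m q0) as [Hm|Hm].
- specialize (Hlin m). apply lt_INR in Hm.
  assert (M * INR m <= M * INR q0) by (apply Rmult_le_compat_l; lra). nra.
- replace m with (q0 + (m - q0))%nat by lia. rewrite plus_INR. specialize (Hk (m - q0)%nat).
  pose proof (pos_INR (m - q0)). nra.
Qed.


Section FL.
Variable X : NormedSpace.

Lemma vsub_scal_same a b (u : X) : vsub (vscal a u) (vscal b u) = vscal (a - b) u.
Proof. rewrite vsub_eq, vscal_assoc, vadd_scal_same. f_equal; ring. Qed.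

Lemma vsub_vadd_r (x l c : X) : vsub x (vadd l c) = vsub (vsub x l) c.
Proof. unfold vsub. rewrite !vopp_scal, vscal_distr_l. apply vadd_assoc. Qed.

Lemma vsub_sub4 (a b c d : X) : vsub (vsub a b) (vsub c d) = vsub (vsub a c) (vsub b d).
Proof.
rewrite !vsub_eq, !vscal_distr_l, !vscal_assoc; apply vadd_ACA.
Qed.

Lemma id_scale_out (e u : X) c : c <> 0 ->
  vadd e (vscal c u) = vscal c (vsub u (vscal (- / c) e)).
Proof.
intros Hc. rewrite vsub_eq, vscal_distr_l, !vscal_assoc, vadd_comm. f_equal.
transitivity (vscal 1 e); [now rewrite vscal_1|f_equal; field; auto].
Qed.

Lemma in_dual_zero : in_dual (fun _ : X => 0).
Proof. split; [|split]; intros; try ring. exists 0. intros. rewrite Rabs_R0. lra. Qed.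


Lemma dual_sub (f : X -> R) x y : in_dual f -> f (vsub x y) = f x - f y.
Proof.
intros [Ha [Hs _]]. rewrite vsub_eq, Ha, Hs. ring.
Qed.

Lemma dual_norm_bound (f : X -> R) : in_dual f -> exists K, 0 <= K /\ forall x, Rabs (f x) <= K * vnorm x.
Proof.
intros [_ [_ [M HM]]]. exists (Rabs M). split. apply Rabs_pos. intros x.
eapply Rle_trans. apply HM. apply Rmult_le_compat_r. apply vnorm_nonneg. apply RRle_abs.
Qed.

Lemma lc_bound (f : nat -> X -> R) (w : nat -> X) m : (forall i, in_dual (f i)) ->
  exists K, 0 <= K /\ forall x, vnorm (vsum (fun i => vscal (f i x) (w i)) m) <= K * vnorm x.
Proof.
intros Hd. induction m.
- exists 0. split. lra. intros x. simpl. rewrite vnorm_0. lra.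
- destruct IHm as [K [HK HKb]]. destruct (dual_norm_bound (f m) (Hd m)) as [K2 [HK2 HK2b]].
  exists (K + K2 * vnorm (w m)). split. pose proof (vnorm_nonneg (w m)). nra.
  intros x. simpl. eapply Rle_trans. apply vnorm_triangle. rewrite vnorm_scal.
  specialize (HKb x). specialize (HK2b x). pose proof (vnorm_nonneg (w m)).
  assert (Rabs (f m x) * vnorm (w m) <= K2 * vnorm x * vnorm (w m)) by (apply Rmult_le_compat_r; auto).
  nra.
Qed.

Lemma closed_mem (E : X -> Prop) (u : X) : Defs.closed_set E ->
  (forall a, 0 < a -> exists e : X, E e /\ vnorm (vsub u e) < a) -> E u.
Proof.
intros Hcl H.
set (ek := fun k : nat => epsilon (inhabits vzero) (fun e => E e /\ vnorm (vsub u e) < / (INR k + 1))).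
assert (Hek : forall k, E (ek k) /\ vnorm (vsub u (ek k)) < / (INR k + 1)).
{ intros k. apply epsilon_spec. apply H. apply Rinv_0_lt_compat. pose proof (pos_INR k); lra. }
apply (Hcl ek u). intros n; apply Hek.
intros eps Heps. destruct (small_inv eps Heps) as [N HN]. exists N. intros k Hk.
rewrite vnorm_sub_sym. destruct (Hek k) as [_ Hk2]. eapply Rlt_le_trans. exact Hk2.
eapply Rle_trans; [|exact HN]. apply Rinv_le_contravar. pose proof (pos_INR N); lra.
apply le_INR in Hk. lra.
Qed.


Section Ext.
Variable (E : X -> Prop) (u : X) (alpha : R).
Hypothesis Hlin : linear_subspace E.
Hypothesis Hcl : Defs.closed_set E.
Hypothesis Hal : 0 < alpha.
Hypothesis Hdist : forall e, E e -> alpha <= vnorm (vsub u e).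

Lemma ext_bound e c : E e -> Rabs c * alpha <= vnorm (vadd e (vscal c u)).
Proof.
intros He. destruct (Req_dec c 0) as [->|Hc].
- rewrite Rabs_R0. rewrite Rmult_0_l. apply vnorm_nonneg.
- rewrite (id_scale_out e u c Hc), vnorm_scal. apply Rmult_le_compat_l. apply Rabs_pos.
  apply Hdist. destruct Hlin as [_ [_ Hs]]. auto.
Qed.

Definition Ext (y : X) := exists e c, E e /\ y = vadd e (vscal c u).

Lemma Ext_lin : linear_subspace Ext.
Proof.
destruct Hlin as [H0 [Ha Hs]]. split; [|split].
- exists vzero, 0. split; auto. now rewrite vscal_0, vadd_0.
- intros x y [e1 [c1 [He1 ->]]] [e2 [c2 [He2 ->]]]. exists (vadd e1 e2), (c1 + c2). split; auto.
  rewrite vadd_ACA, vadd_scal_same. reflexivity.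
- intros a x [e [c [He ->]]]. exists (vscal a e), (a * c). split; auto.
  now rewrite vscal_distr_l, vscal_assoc.
Qed.

Lemma Ext_closed : Defs.closed_set Ext.
Proof.
intros yk y Hyk Hconv.
set (pk := fun k => epsilon (inhabits (0, @vzero X)) (fun p => E (snd p) /\ yk k = vadd (snd p) (vscal (fst p) u))).
assert (Hpk : forall k, E (snd (pk k)) /\ yk k = vadd (snd (pk k)) (vscal (fst (pk k)) u)).
{ intros k. apply epsilon_spec. destruct (Hyk k) as [e [c [He Hy]]]. exists (c, e). auto. }
set (ck := fun k => fst (pk k)).
assert (Hdiff : forall k l, Rabs (ck k - ck l) * alpha <= vnorm (vsub (yk k) (yk l))).
{ intros k l. destruct (Hpk k) as [Hk Hyk']. destruct (Hpk l) as [Hl Hyl'].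
  rewrite Hyk', Hyl', vsub_add, vsub_scal_same. apply ext_bound.
  destruct Hlin as [_ [Ha Hs]]. rewrite vsub_eq. auto. }
assert (Hcau : Cauchy_crit ck).
{ intros eps Heps. destruct (Hconv (eps * alpha / 2)) as [N HN]. apply Rmult_lt_0_compat; [nra|lra].
  exists N. intros k l Hk Hl. unfold R_dist.
  specialize (Hdiff k l). pose proof (vnorm_sub_triangle _ (yk k) y (yk l)).
  rewrite (vnorm_sub_sym _ y (yk l)) in H. pose proof (HN k Hk). pose proof (HN l Hl).
  apply (Rmult_lt_reg_r alpha); auto. lra. }
destruct (R_complete ck Hcau) as [c Hc].
exists (vsub y (vscal c u)), c. split; [|now rewrite vsub_add_cancel].
apply (Hcl (fun k => snd (pk k))). intros k; apply Hpk.
intros eps Heps.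
destruct (Hconv (eps / 2)) as [N1 HN1]. lra.
destruct (Hc (eps / (2 * (vnorm u + 1)))) as [N2 HN2].
{ pose proof (vnorm_nonneg u). apply Rdiv_lt_0_compat; lra. }
exists (max N1 N2). intros k Hk.
destruct (Hpk k) as [_ Hyk'].
assert (Hsnd : snd (pk k) = vsub (yk k) (vscal (ck k) u)) by (rewrite Hyk'; unfold ck; now rewrite vadd_sub_cancel).
rewrite Hsnd, vsub_sub4, vsub_scal_same.
eapply Rle_lt_trans. apply vnorm_sub_le. rewrite vnorm_scal.
specialize (HN1 k ltac:(lia)). specialize (HN2 k ltac:(lia)). unfold R_dist in HN2.
pose proof (vnorm_nonneg u).
assert (Rabs (ck k - c) * vnorm u <= eps / (2 * (vnorm u + 1)) * vnorm u) by (apply Rmult_le_compat_r; lra).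
assert (eps / (2 * (vnorm u + 1)) * vnorm u <= eps / 2).
{ unfold Rdiv. rewrite Rmult_assoc, (Rmult_comm (/ _)), <- Rmult_assoc.
  apply (Rmult_le_reg_r (2 * (vnorm u + 1))). lra. rewrite Rmult_assoc, Rinv_l by lra. nra. }
lra.
Qed.

Definition gext (y : X) : R := epsilon (inhabits 0) (fun c => exists e : X, E e /\ y = vadd e (vscal c u)).

Lemma gext_spec y : Ext y -> exists e : X, E e /\ y = vadd e (vscal (gext y) u).
Proof. intros [e [c H]]. unfold gext. apply epsilon_spec. exists c, e. exact H. Qed.

Lemma gext_unique y e c : E e -> y = vadd e (vscal c u) -> gext y = c.
Proof.
intros He Hy. destruct (gext_spec y) as [e2 [He2 Hy2]]. exists e, c; auto.
assert (H := ext_bound (vsub e e2) (c - gext y)).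
rewrite <- vsub_scal_same, <- vsub_add, <- Hy, <- Hy2, vsub_self, vnorm_0 in H.
assert (Rabs (c - gext y) * alpha <= 0).
{ apply H. destruct Hlin as [_ [Ha Hs]]. rewrite vsub_eq. auto. }
assert (Rabs (c - gext y) <= 0) by (apply (Rmult_le_reg_r alpha); lra).
pose proof (Rabs_pos (c - gext y)).
destruct (Req_dec (c - gext y) 0) as [Hz|Hz]. lra. pose proof (Rabs_pos_lt _ Hz). lra.
Qed.

Lemma gext_add y1 y2 : Ext y1 -> Ext y2 -> gext (vadd y1 y2) = gext y1 + gext y2.
Proof.
intros H1 H2. destruct (gext_spec y1 H1) as [e1 [He1 Hy1]]. destruct (gext_spec y2 H2) as [e2 [He2 Hy2]].
apply (gext_unique _ (vadd e1 e2)). destruct Hlin as [_ [Ha _]]; auto.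
rewrite Hy1 at 1. rewrite Hy2 at 1. rewrite vadd_ACA, vadd_scal_same. reflexivity.
Qed.

Lemma gext_scal a y : Ext y -> gext (vscal a y) = a * gext y.
Proof.
intros H1. destruct (gext_spec y H1) as [e1 [He1 Hy1]].
apply (gext_unique _ (vscal a e1)). destruct Hlin as [_ [_ Hs]]; auto.
rewrite Hy1 at 1. now rewrite vscal_distr_l, vscal_assoc.
Qed.

Lemma gext_bound y : Ext y -> Rabs (gext y) * alpha <= vnorm y.
Proof.
intros H1. destruct (gext_spec y H1) as [e1 [He1 Hy1]]. rewrite Hy1 at 2. now apply ext_bound.
Qed.

End Ext.

Lemma FL_gen n : forall (v : nat -> X) (E : X -> Prop), linear_subspace E -> Defs.closed_set E ->
  (forall x, exists e c, E e /\ x = vadd e (vsum (fun i => vscal (c i) (v i)) n)) ->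
  exists m f w, (forall i, in_dual (f i)) /\
     forall x, E (vsub x (vsum (fun i => vscal (f i x) (w i)) m)).
Proof.
induction n; intros v E Hlin Hcl Hsp.
- exists O, (fun _ _ => 0), (fun _ => vzero). split. intros; apply in_dual_zero.
  intros x. destruct (Hsp x) as [e [c [He Hx]]]. simpl in *. rewrite vsub_0r, Hx, vadd_0. exact He.
- set (u := v n).
  assert (Hrearr : forall (e A : X) c, vadd e (vadd A (vscal c u)) = vadd (vadd e (vscal c u)) A).
  { intros. rewrite <- !vadd_assoc. f_equal. apply vadd_comm. }
  destruct (classic (forall a, 0 < a -> exists e : X, E e /\ vnorm (vsub u e) < a)) as [Hin|Hout].
  + assert (Eu : E u) by (apply closed_mem; auto).
    apply (IHn v E Hlin Hcl). intros x. destruct (Hsp x) as [e [c [He Hx]]].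
    exists (vadd e (vscal (c n) u)), c. split.
    destruct Hlin as [_ [Ha Hs]]; auto.
    rewrite Hx. simpl. apply Hrearr.
  + apply not_all_ex_not in Hout. destruct Hout as [alpha Hal].
    apply imply_to_and in Hal. destruct Hal as [Hal Hno].
    assert (Hdist : forall e, E e -> alpha <= vnorm (vsub u e)).
    { intros e He. apply Rnot_lt_le. intros Hlt. apply Hno. exists e; auto. }
    destruct (IHn v (Ext E u) (Ext_lin E u Hlin) (Ext_closed E u alpha Hlin Hcl Hal Hdist)) as [m [f [w [Hd HE']]]].
    { intros x. destruct (Hsp x) as [e [c [He Hx]]].
      exists (vadd e (vscal (c n) u)), c. split. exists e, (c n); auto.
      rewrite Hx. simpl. apply Hrearr. }
    set (T := fun x => vsub x (vsum (fun i => vscal (f i x) (w i)) m)).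
    set (fn := fun x => gext E u (T x)).
    exists (S m), (fun i => if Nat.eq_dec i m then fn else f i), (fun i => if Nat.eq_dec i m then u else w i).
    assert (HTadd : forall x y, T (vadd x y) = vadd (T x) (T y)).
    { intros x y. unfold T. rewrite <- vsub_add, <- vsum_add. f_equal. apply vsum_ext.
      intros i _. destruct (Hd i) as [Ha _]. now rewrite Ha, vscal_distr_r. }
    assert (HTscal : forall a x, T (vscal a x) = vscal a (T x)).
    { intros a x. unfold T. rewrite vsub_scal, <- vsum_scal. f_equal. apply vsum_ext.
      intros i _. destruct (Hd i) as [_ [Hs _]]. now rewrite Hs, vscal_assoc. }
    assert (Hfn : in_dual fn).
    { split; [|split].
      - intros x y. unfold fn. rewrite HTadd. apply gext_add with (alpha := alpha); auto; apply HE'.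
      - intros a x. unfold fn. rewrite HTscal. apply gext_scal with (alpha := alpha); auto; apply HE'.
      - destruct (lc_bound f w m Hd) as [K [HK HKb]].
        exists ((1 + K) / alpha). intros x.
        assert (H1 := gext_bound E u alpha Hlin Hdist (T x) (HE' x)). fold (fn x) in H1.
        assert (H2 : vnorm (T x) <= (1 + K) * vnorm x).
        { unfold T. eapply Rle_trans. apply vnorm_sub_le. specialize (HKb x). lra. }
        apply (Rmult_le_reg_r alpha); auto. replace ((1 + K) / alpha * vnorm x * alpha) with ((1+K) * vnorm x) by (field; lra). lra. }
    split.
    * intros i. destruct (Nat.eq_dec i m); auto.
    * intros x. simpl. destruct (Nat.eq_dec m m) as [_|Hc]; [|congruence].
      rewrite (vsum_ext _ _ (fun i => vscal (f i x) (w i))).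
      2:{ intros i Hi. destruct (Nat.eq_dec i m); [lia|reflexivity]. }
      rewrite vsub_vadd_r. fold (T x).
      destruct (gext_spec E u (T x) (HE' x)) as [e [He HTx]].
      unfold fn. rewrite HTx at 1. rewrite vadd_sub_cancel. exact He.
Qed.

Lemma FL (E : X -> Prop) : closed_fin_codim E ->
  exists m f w, (forall i, in_dual (f i)) /\
     forall x, E (vsub x (vsum (fun i => vscal (f i x) (w i)) m)).
Proof.
intros [Hlin [Hcl [n [v Hsp]]]]. apply (FL_gen n v E Hlin Hcl Hsp).
Qed.

End FL.


Section Ultra.
Variable U : (nat -> Prop) -> Prop.
Hypothesis HU_ev : forall N, U (fun n => (N <= n)%nat).
Hypothesis HU_nf : ~ U (fun _ => False).
Hypothesis HU_and : forall A B, U A -> U B -> U (fun n => A n /\ B n).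
Hypothesis HU_mono : forall A B : nat -> Prop, (forall n, A n -> B n) -> U A -> U B.
Hypothesis HU_ult : forall A, U A \/ U (fun n => ~ A n).

Lemma U_inf A N : U A -> exists n, (N <= n)%nat /\ A n.
Proof.
intros HA. apply NNPP. intros Hn. apply HU_nf.
apply (HU_mono (fun n => (N <= n)%nat /\ A n)). intros n Hn2. apply Hn. eauto.
apply HU_and; auto.
Qed.

Lemma U_true : U (fun _ => True).
Proof. apply (HU_mono _ _ (fun n _ => I) (HU_ev 0)). Qed.

Definition ulim_prop (g : nat -> R) (L : R) := forall eta, 0 < eta -> U (fun n => Rabs (g n - L) < eta).

Lemma ulim_ex (g : nat -> R) C : (forall n, Rabs (g n) <= C) -> exists L, ulim_prop g L.
Proof.
intros HC.
set (Sa := fun a => U (fun n => a <= g n)).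
assert (Hb : bound Sa).
{ exists C. intros a Ha. apply Rnot_lt_le. intros Hlt. apply HU_nf.
  apply (HU_mono (fun n => a <= g n)); auto. intros n Hn.
  pose proof (Rle_abs (g n)). pose proof (HC n). lra. }
assert (Hne : exists a, Sa a).
{ exists (- C). unfold Sa. eapply HU_mono; [|exact U_true]. intros n _. pose proof (Rle_abs (- g n)). rewrite Rabs_Ropp in H. pose proof (HC n). lra. }
destruct (completeness Sa Hb Hne) as [L [HLub HLl]].
exists L. intros eta Heta.
assert (H1 : U (fun n => L - eta < g n)).
{ apply NNPP. intros Hn.
  assert (Hub : is_upper_bound Sa (L - eta)).
  { intros a Ha. apply Rnot_lt_le. intros Hlt. apply Hn.
    apply (HU_mono (fun n => a <= g n)); auto. intros n Hn2. lra. }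
  specialize (HLl _ Hub). lra. }
assert (H2 : U (fun n => g n < L + eta)).
{ destruct (HU_ult (fun n => g n < L + eta)) as [H|H]; auto.
  assert (Sa (L + eta)).
  { apply (HU_mono _ _ (fun n Hn => Rnot_lt_le _ _ Hn) H). }
  specialize (HLub _ H0). lra. }
eapply HU_mono; [|exact (HU_and _ _ H1 H2)]. intros n [Ha Hb']. apply Rabs_def1; lra.
Qed.

Lemma ulim_unique g L1 L2 : ulim_prop g L1 -> ulim_prop g L2 -> L1 = L2.
Proof.
intros H1 H2. destruct (Req_dec L1 L2) as [|Hne]; auto. exfalso.
set (d := Rabs (L1 - L2) / 2).
assert (Hd : 0 < d) by (unfold d; pose proof (Rabs_pos_lt _ (Rminus_eq_contra _ _ Hne)); lra).
destruct (U_inf _ 0 (HU_and _ _ (H1 d Hd) (H2 d Hd))) as [n [_ [Hn1 Hn2]]].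
pose proof (Rabs_triang (L1 - g n) (g n - L2)).
replace (L1 - g n + (g n - L2)) with (L1 - L2) in H by ring.
rewrite (Rabs_minus_sym L1 (g n)) in H. unfold d in *. lra.
Qed.

Lemma U_forall_lt (A : nat -> nat -> Prop) m :
  (forall i, (i < m)%nat -> U (A i)) -> U (fun n => forall i, (i < m)%nat -> A i n).
Proof.
induction m; intros H.
- eapply HU_mono; [|exact U_true]. intros; lia.
- apply (HU_mono (fun n => (forall i, (i < m)%nat -> A i n) /\ A m n)).
  + intros n [Ha Hb] i Hi. destruct (Nat.eq_dec i m) as [->|]; auto. apply Ha; lia.
  + apply HU_and. apply IHm. intros; apply H; lia. apply H; lia.
Qed.

End Ultra.


Lemma strict_from_step (f : nat -> nat) : (forall k, (f k < f (S k))%nat) -> strictly_increasing f.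
Proof.
intros H i j Hij. induction j. lia.
destruct (Nat.eq_dec i j) as [->|Hne]. apply H. specialize (IHj ltac:(lia)). specialize (H j). lia.
Qed.

Section Main.
Variable U : (nat -> Prop) -> Prop.
Hypothesis HU_ev : forall N, U (fun n => (N <= n)%nat).
Hypothesis HU_nf : ~ U (fun _ => False).
Hypothesis HU_and : forall A B, U A -> U B -> U (fun n => A n /\ B n).
Hypothesis HU_mono : forall A B : nat -> Prop, (forall n, A n -> B n) -> U A -> U B.
Hypothesis HU_ult : forall A, U A \/ U (fun n => ~ A n).

Variable X : NormedSpace.
Let UF := U_forall_lt U HU_ev HU_and HU_mono.
Let UI := U_inf U HU_ev HU_nf HU_and HU_mono.
Let UU := ulim_unique U HU_ev HU_nf HU_and HU_mono.
Let UE := ulim_ex U HU_ev HU_nf HU_and HU_mono HU_ult.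

Lemma small_lc (w : nat -> X) m : exists W, 0 <= W /\ forall (c : nat -> R) eta, 0 <= eta ->
  (forall i, (i < m)%nat -> Rabs (c i) <= eta) -> vnorm (vsum (fun i => vscal (c i) (w i)) m) <= eta * W.
Proof.
induction m.
- exists 0. split. lra. intros. simpl. rewrite vnorm_0. lra.
- destruct IHm as [W [HW HWb]]. exists (W + vnorm (w m)). split. pose proof (vnorm_nonneg (w m)); lra.
  intros c eta He Hc. simpl. eapply Rle_trans. apply vnorm_triangle. rewrite vnorm_scal.
  specialize (HWb c eta He ltac:(intros; apply Hc; lia)). specialize (Hc m ltac:(lia)).
  pose proof (vnorm_nonneg (w m)).
  assert (Rabs (c m) * vnorm (w m) <= eta * vnorm (w m)) by (apply Rmult_le_compat_r; auto). nra.
Qed.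

Lemma approx (E : X -> Prop) d : closed_fin_codim E -> 0 < d ->
  exists m f eta, 0 < eta /\ (forall i, in_dual (f i)) /\
    forall y, (forall i, (i < m)%nat -> Rabs (f i y) <= eta) -> exists e, E e /\ vnorm (vsub y e) < d.
Proof.
intros HE Hd. destruct (FL X E HE) as [m [f [w [Hdual HEf]]]].
destruct (small_lc w m) as [W [HW HWb]].
exists m, f, (d / (2 * (W + 1))). split. apply Rdiv_lt_0_compat; lra. split; auto.
intros y Hy. exists (vsub y (vsum (fun i => vscal (f i y) (w i)) m)). split; auto.
rewrite vsub_vsub. eapply Rle_lt_trans. apply (HWb _ (d / (2 * (W + 1)))). left; apply Rdiv_lt_0_compat; lra. exact Hy.
apply (Rmult_lt_reg_r (2 * (W + 1))). lra.
replace (d / (2 * (W + 1)) * W * (2 * (W + 1))) with (d * W) by (field; lra). nra.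
Qed.

Definition P_abs (u : nat -> X) N N' v := exists a b, (N <= a)%nat /\ (a < b)%nat /\ N' = S b /\ v = vsub (u a) (u b).
Definition P_bs (u : nat -> X) (x : X) N N' v := exists n, (N <= n)%nat /\ N' = S n /\ v = vsub (u n) x.

Lemma dual_seq_bound (f : X -> R) (u : nat -> X) M0 : in_dual f -> (forall n, vnorm (u n) <= M0) ->
  exists C, forall n, Rabs (f (u n)) <= C.
Proof.
intros Hf Hu. destruct (dual_norm_bound X f Hf) as [K [HK HKb]]. exists (K * M0). intros n.
eapply Rle_trans. apply HKb. apply Rmult_le_compat_l; auto.
Qed.

Lemma cand_abs (u : nat -> X) M0 : (forall n, vnorm (u n) <= M0) -> cand_hyp X (P_abs u).
Proof.
intros Hu N E d HE Hd. destruct (approx E d HE Hd) as [m [f [eta [Heta [Hdual Happ]]]]].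
set (Lf := fun i => epsilon (inhabits 0) (ulim_prop U (fun n => f i (u n)))).
assert (HL : forall i, ulim_prop U (fun n => f i (u n)) (Lf i)).
{ intros i. apply epsilon_spec. destruct (dual_seq_bound (f i) u M0 (Hdual i) Hu) as [C HC].
  eapply UE; eauto. }
assert (HW := UF (fun i n => Rabs (f i (u n) - Lf i) < eta / 2) m
  (fun i _ => HL i (eta/2) ltac:(lra))).
destruct (UI _ N HW) as [a [Ha HWa]].
destruct (UI _ (S a) HW) as [b [Hb HWb]].
destruct (Happ (vsub (u a) (u b))) as [e [He Hve]].
{ intros i Hi. rewrite dual_sub by auto. specialize (HWa i Hi). specialize (HWb i Hi).
  pose proof (Rabs_triang (f i (u a) - Lf i) (- (f i (u b) - Lf i))). rewrite Rabs_Ropp in H.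
  replace (f i (u a) - Lf i + - (f i (u b) - Lf i)) with (f i (u a) - f i (u b)) in H by ring. lra. }
exists (S b), (vsub (u a) (u b)), e. split; auto. exists a, b. repeat split; auto; lia.
Qed.

Lemma cand_bs (u : nat -> X) x : (forall f, in_dual f -> ulim_prop U (fun n => f (u n)) (f x)) ->
  cand_hyp X (P_bs u x).
Proof.
intros Hx N E d HE Hd. destruct (approx E d HE Hd) as [m [f [eta [Heta [Hdual Happ]]]]].
assert (HW := UF (fun i n => Rabs (f i (u n) - f i x) < eta) m
  (fun i _ => Hx (f i) (Hdual i) eta Heta)).
destruct (UI _ N HW) as [a [Ha HWa]].
destruct (Happ (vsub (u a) x)) as [e [He Hve]].
{ intros i Hi. rewrite dual_sub by auto. left. apply HWa; auto. }
exists (S a), (vsub (u a) x), e. split; auto. exists a. repeat split; auto.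
Qed.

Lemma refl_point (u : nat -> X) M0 : 0 <= M0 -> (forall n, vnorm (u n) <= M0) -> reflexive X ->
  exists x, forall f, in_dual f -> ulim_prop U (fun n => f (u n)) (f x).
Proof.
intros HM0 Hu Hrefl.
set (Phi := fun f : X -> R => epsilon (inhabits 0) (ulim_prop U (fun n => f (u n)))).
assert (Hex : forall f : X -> R, (exists C, forall n, Rabs (f (u n)) <= C) -> ulim_prop U (fun n => f (u n)) (Phi f)).
{ intros f [C HC]. apply epsilon_spec. eapply UE; eauto. }
assert (Hsp : forall f, in_dual f -> ulim_prop U (fun n => f (u n)) (Phi f)).
{ intros f Hf. apply Hex. eapply dual_seq_bound; eauto. }
destruct (Hrefl Phi) as [x Hx].
- intros f g Hf Hg. apply (UU (fun n => f (u n) + g (u n))).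
  + apply (Hex (fun x => f x + g x)). destruct (dual_seq_bound f u M0 Hf Hu) as [C1 H1]. destruct (dual_seq_bound g u M0 Hg Hu) as [C2 H2].
    exists (C1 + C2). intros n. eapply Rle_trans. apply Rabs_triang. specialize (H1 n). specialize (H2 n). lra.
  + intros eta Heta. eapply HU_mono; [|exact (HU_and _ _ (Hsp f Hf (eta/2) ltac:(lra)) (Hsp g Hg (eta/2) ltac:(lra)))].
    intros n [H1 H2]. pose proof (Rabs_triang (f (u n) - Phi f) (g (u n) - Phi g)).
    replace (f (u n) - Phi f + (g (u n) - Phi g)) with (f (u n) + g (u n) - (Phi f + Phi g)) in H by ring. lra.
- intros a f Hf. apply (UU (fun n => a * f (u n))).
  + apply (Hex (fun x => a * f x)). destruct (dual_seq_bound f u M0 Hf Hu) as [C1 H1]. exists (Rabs a * C1). intros n.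
    rewrite Rabs_mult. apply Rmult_le_compat_l. apply Rabs_pos. auto.
  + intros eta Heta. assert (Ha : 0 < Rabs a + 1) by (pose proof (Rabs_pos a); lra).
    eapply HU_mono; [|exact (Hsp f Hf (eta / (Rabs a + 1)) ltac:(apply Rdiv_lt_0_compat; lra))].
    intros n Hn. replace (a * f (u n) - a * Phi f) with (a * (f (u n) - Phi f)) by ring.
    rewrite Rabs_mult. pose proof (Rabs_pos a). pose proof (Rabs_pos (f (u n) - Phi f)).
    assert (Rabs a * Rabs (f (u n) - Phi f) <= Rabs a * (eta / (Rabs a + 1))) by (apply Rmult_le_compat_l; lra).
    assert (Rabs a * (eta / (Rabs a + 1)) < eta).
    { apply (Rmult_lt_reg_r (Rabs a + 1)); auto. replace (Rabs a * (eta / (Rabs a + 1)) * (Rabs a + 1)) with (Rabs a * eta) by (field; lra). nra. }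
    lra.
- exists M0. intros f M Hf HM Hb. apply Rnot_lt_le. intros Hlt.
  set (eta := Rabs (Phi f) - M0 * M).
  destruct (UI _ 0 (Hsp f Hf eta ltac:(unfold eta; lra))) as [n [_ Hn]].
  pose proof (Rabs_triang (f (u n)) (Phi f - f (u n))). replace (f (u n) + (Phi f - f (u n))) with (Phi f) in H by ring.
  rewrite Rabs_minus_sym in H. specialize (Hb (u n)). specialize (Hu n).
  assert (M * vnorm (u n) <= M * M0) by (apply Rmult_le_compat_l; auto). unfold eta in Hn. lra.
- exists x. intros f Hf. rewrite <- (Hx f Hf). apply Hsp; auto.
Qed.

Lemma cesaro_zero (T : nat -> X) :
  (forall eta, 0 < eta -> exists A, forall k, vnorm (T k) <= A + eta * INR k) ->
  forall eps, 0 < eps -> exists N, forall k, (N <= k)%nat -> (1 <= k)%nat /\ / INR k * vnorm (T k) < eps.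
Proof.
intros H eps Heps. destruct (H (eps/2) ltac:(lra)) as [A HA].
destruct (INR_unbounded (2 * Rabs A / eps)) as [N0 HN0].
exists (S N0). intros k Hk. split. lia.
assert (Hk' : INR (S N0) <= INR k) by (apply le_INR; auto). rewrite S_INR in Hk'.
assert (Hkp : 0 < INR k) by (pose proof (pos_INR N0); lra).
assert (H2 : 2 * Rabs A / eps * eps = 2 * Rabs A) by (field; lra).
assert (2 * Rabs A < INR k * eps).
{ rewrite <- H2. apply Rmult_lt_compat_r; auto. lra. }
specialize (HA k). pose proof (Rle_abs A).
assert (vnorm (T k) < eps * INR k) by lra.
apply (Rmult_lt_reg_l (INR k)); auto. rewrite <- Rmult_assoc, Rinv_r by lra. lra.
Qed.

Lemma main_U : asymptotically_uniformly_smooth X ->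
  alternating_banach_saks X /\ (reflexive X -> banach_saks X).
Proof.
intros Haus. split.
- intros u [M0 HM0].
  assert (HM0p : 0 <= M0) by (pose proof (vnorm_nonneg (u O)); specialize (HM0 O); lra).
  destruct (core X (P_abs u) (M0 + M0) Haus ltac:(lra)) as [Ns [vs [HP Hbd]]].
  { intros N N' v [a [b [_ [_ [_ ->]]]]]. eapply Rle_trans. apply vnorm_sub_le. pose proof (HM0 a); pose proof (HM0 b); lra. }
  { apply (cand_abs u M0 HM0). }
  set (ab := fun j => epsilon (inhabits (O, O)) (fun p => (Ns j <= fst p)%nat /\ (fst p < snd p)%nat /\
        Ns (S j) = S (snd p) /\ vs j = vsub (u (fst p)) (u (snd p)))).
  assert (Hab : forall j, (Ns j <= fst (ab j))%nat /\ (fst (ab j) < snd (ab j))%nat /\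
        Ns (S j) = S (snd (ab j)) /\ vs j = vsub (u (fst (ab j))) (u (snd (ab j)))).
  { intros j. apply epsilon_spec. destruct (HP j) as [a [b [H1 [H2 [H3 H4]]]]]. exists (a, b). simpl. auto. }
  set (a := fun j => fst (ab j)). set (b := fun j => snd (ab j)).
  set (phi := fun k => if Nat.even k then a (Nat.div2 k) else b (Nat.div2 k)).
  set (s := fun k : nat => if Nat.even k then 1 else -1).
  assert (Hpe : forall i, phi (2 * i)%nat = a i) by (intros; unfold phi; now rewrite Nat.even_even, Nat.div2_double).
  assert (Hse : forall i, s (2 * i)%nat = 1) by (intros; unfold s; now rewrite Nat.even_even).
  assert (Hpo : forall i, phi (S (2 * i))%nat = b i).
  { intros; unfold phi. rewrite <- Nat.add_1_r. now rewrite Nat.even_odd, Nat.div2_odd'. }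
  assert (Hso : forall i, s (S (2 * i))%nat = -1).
  { intros; unfold s. rewrite <- Nat.add_1_r. now rewrite Nat.even_odd. }
  exists phi, s. split; [|split].
  + apply strict_from_step. intros k. destruct (Nat.Even_or_Odd k) as [[i ->]|[i ->]].
    * rewrite Hpe, Hpo. apply Hab.
    * rewrite Nat.add_1_r, Hpo. replace (S (S (2 * i))) with (2 * S i)%nat by lia. rewrite Hpe.
      destruct (Hab i) as [_ [_ [H3 _]]]. destruct (Hab (S i)) as [H1 _]. unfold a, b. lia.
  + intros j. unfold s. destruct (Nat.even j); auto.
  + set (T := fun k => vsum (fun j => vscal (s j) (u (phi j))) k).
    assert (HTe : forall i, T (2 * i)%nat = vsum vs i).
    { induction i. reflexivity. unfold T in *. replace (2 * S i)%nat with (S (S (2 * i))) by lia.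
      cbn [vsum]. rewrite IHi, Hso, Hpo, Hse, Hpe, vscal_1. destruct (Hab i) as [_ [_ [_ H4]]].
      fold (a i) (b i) in H4. rewrite H4, vsub_eq, vadd_assoc. reflexivity. }
    assert (HTo : forall i, T (S (2 * i)) = vadd (vsum vs i) (u (a i))).
    { intros i. unfold T. cbn [vsum]. fold (T (2 * i)%nat). now rewrite HTe, Hse, Hpe, vscal_1. }
    assert (HTb : forall eta, 0 < eta -> exists A, forall k, vnorm (T k) <= A + eta * INR k).
    { intros eta Heta. destruct (Hbd eta Heta) as [A HA]. exists (A + M0). intros k.
      destruct (Nat.Even_or_Odd k) as [[i ->]|[i ->]].
      - rewrite HTe. specialize (HA i). assert (INR i <= INR (2 * i)) by (apply le_INR; lia). nra.
      - rewrite Nat.add_1_r, HTo. eapply Rle_trans. apply vnorm_triangle. specialize (HA i). specialize (HM0 (a i)).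
        assert (INR i <= INR (S (2 * i))) by (apply le_INR; lia). nra. }
    exists vzero. intros eps Heps. destruct (cesaro_zero T HTb eps Heps) as [N HN]. exists N. intros k Hk.
    destruct (HN k Hk) as [Hk1 Hlt]. unfold cesaro. rewrite vsub_0r, vnorm_scal. fold (T k).
    rewrite Rabs_pos_eq. exact Hlt. left. apply Rinv_0_lt_compat. apply lt_0_INR. lia.
- intros Hrefl u [M0 HM0].
  assert (HM0p : 0 <= M0) by (pose proof (vnorm_nonneg (u O)); specialize (HM0 O); lra).
  destruct (refl_point u M0 HM0p HM0 Hrefl) as [x Hx].
  destruct (core X (P_bs u x) (M0 + vnorm x) Haus ltac:(pose proof (vnorm_nonneg x); lra)) as [Ns [vs [HP Hbd]]].
  { intros N N' v [n [_ [_ ->]]]. eapply Rle_trans. apply vnorm_sub_le. specialize (HM0 n); lra. }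
  { apply (cand_bs u x Hx). }
  set (nj := fun j => epsilon (inhabits O) (fun n => (Ns j <= n)%nat /\ Ns (S j) = S n /\ vs j = vsub (u n) x)).
  assert (Hnj : forall j, (Ns j <= nj j)%nat /\ Ns (S j) = S (nj j) /\ vs j = vsub (u (nj j)) x).
  { intros j. apply epsilon_spec. destruct (HP j) as [n Hn]. exists n. auto. }
  exists nj. split.
  + apply strict_from_step. intros k. destruct (Hnj k) as [_ [H2 _]]. destruct (Hnj (S k)) as [H1 _]. lia.
  + exists x. intros eps Heps. destruct (cesaro_zero (vsum vs) Hbd eps Heps) as [N HN]. exists N. intros k Hk.
    destruct (HN k Hk) as [Hk1 Hlt].
    assert (Hkp : 0 < INR k) by (apply lt_0_INR; lia).
    assert (Heq : vsub (cesaro (fun j => u (nj j)) k) x = vscal (/ INR k) (vsum vs k)).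
    { rewrite (vsum_ext _ vs (fun j => vsub (u (nj j)) x)) by (intros i _; apply Hnj).
      rewrite vsum_sub, vsum_const, vsub_scal, vscal_assoc, Rinv_l, vscal_1 by lra. reflexivity. }
    rewrite Heq, vnorm_scal, Rabs_pos_eq. exact Hlt. left. apply Rinv_0_lt_compat; auto.
Qed.

End Main.

Module U.
From mathcomp Require Import all_boot all_classical.
Local Open Scope classical_set_scope.
Lemma ultra_nat : exists U : (nat -> Prop) -> Prop,
  (forall N, U (fun n => (N <= n)%coq_nat)) /\
  (~ U (fun _ => False)) /\
  (forall A B, U A -> U B -> U (fun n => A n /\ B n)) /\
  (forall A B : nat -> Prop, (forall n, A n -> B n) -> U A -> U B) /\
  (forall A, U A \/ U (fun n => ~ A n)).
Proof.
have [G [GU sFG]] := ultraFilterLemma eventually_filter.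
exists G; split.
  move=> N; apply: sFG; exists N => // n /= /leP; done.
split; first by move=> G0; have := @filter_ex _ G _ (fun _ => False) G0 => -[].
split; first by move=> A B GA GB; exact: (filterI GA GB).
split; first by move=> A B AB GA; exact: (filterS AB GA).
move=> A; exact: (in_ultra_setVsetC A GU).
Qed.
End U.

Theorem corollary3p2 (X : BanachSpace) :
  asymptotically_uniformly_smooth X ->
  alternating_banach_saks X /\ (reflexive X -> banach_saks X).
Proof.
destruct U.ultra_nat as [U [H1 [H2 [H3 [H4 H5]]]]].
exact (main_U U H1 H2 H3 H4 H5 X).
Qed.
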